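(* Let $(A,\succ,\prec,\omega)$ be a quadratic anti-pre-Novikov algebra and $s\in A\otimes A$ such that $s+\tau(s)$ is invariant. Define $P:A\to A$ by $P(x)=T_s\omega^\sharp(x)$. Then $s$ is a solution of the anti-pre-Novikov Yang–Baxter equation in $(A,\succ,\prec)$ if and only if for all $x,y\in A$: $P(x)\succ P(y)=P\big(P(x)\succ y+x\succ P(y)-x\succ T_{s+\tau(s)}\omega^\sharp(y)\big)$ and $P(x)\prec P(y)=P\big(P(x)\prec y+x\prec P(y)-x\prec T_{s+\tau(s)}\omega^\sharp(y)\big)$.
   Context: $A$ is finite-dimensional over a field $k$. An anti-pre-Novikov algebra is $(A,\succ,\prec)$ such that with $x\circ y=x\succ y+x\prec y$: $(x\circ y-y\circ x)\succ z=y\succ(x\succ z)-x\succ(y\succ z)$; $x\prec(y\circ z)=(y\succ x)\prec z-(x\prec y)\prec z-y\succ(x\prec z)$; $(x\circ y)\succ z=-(x\succ z)\prec y$; $(x\prec y)\prec z=(x\prec z)\prec y$; $(x\circ y-y\circ x)\prec z=x\succ(y\circ z)-y\succ(x\circ z)$. It is quadratic with respect to $\omega$ if $\omega$ is non-degenerate symmetric bilinear with $\omega(x\prec y,z)=-\omega(x,z\circ y)$, $\omega(x\succ y,z)=\omega(x\circ z+z\circ x,y)$. $\omega^\sharp:A\to A^*$ is $\langle\omega^\sharp(x),y\rangle=\omega(x,y)$. For $r\in A\otimes A$, $T_r:A^*\to A$ is $\langle T_r(\zeta),\eta\rangle=\langle r,\zeta\otimes\eta\rangle$; $\tau$ is the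 flip. With $L_\ast(x)y=x\ast y$, $R_\ast(x)y=y\ast x$, $x\odot y=x\succ y+y\prec x$, $L_{\star}=L_{\circ}+R_{\circ}$, $L_{\odot}=L_{\succ}+R_{\prec}$: $r$ is invariant if $(I\otimes L_{\star}(x)-L_{\succ}(x)\otimes I)r=0$ and $(L_{\circ}(x)\otimes I-I\otimes L_{\odot}(x))r=0$ for all $x$. For $s=\sum_i a_i\otimes b_i$ the anti-pre-Novikov Yang–Baxter equation is $\sum_{i,j}a_i\circ a_j\otimes b_i\otimes b_j+\sum_{i,j}a_j\otimes a_i\otimes(b_i\odot b_j)+\sum_{i,j}a_i\otimes(b_i\prec a_j)\otimes b_j=0$. *)

(* Defs.v *)
(* A finite-dimensional k-vector space A of dimension n is
   modelled as 'rV[k]_n (coordinates in the standard basis evec i);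
   A ⊗ A is modelled by coefficient matrices 'M[k]_n
   (r = \sum_{i,j} r i j e_i ⊗ e_j), A ⊗ A ⊗ A by coefficient functions
   on 'I_n * 'I_n * 'I_n, and A^* by 'rV[k]_n via the pairing
   <z, x> = \sum_i z_i x_i. *)
From HB Require Import structures.
From mathcomp Require Import all_boot all_order all_algebra.
Set Implicit Arguments. Unset Strict Implicit. Unset Printing Implicit Defensive.
Import GRing.Theory.
Local Open Scope ring_scope.

Section APN.
Variables (k : fieldType) (n : nat).
Local Notation A := 'rV[k]_n.

Definition evec (i : 'I_n) : A := delta_mx 0 i.

Definition pairing (z x : A) : k := \sum_i z 0 i * x 0 i.

Definition tens2 (a b : A) : 'M[k]_n := \matrix_(i, j) (a 0 i * b 0 j).
Definition tens3 (a b c : A) : {ffun 'I_n * 'I_n * 'I_n -> k} :=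
  [ffun t => a 0 t.1.1 * b 0 t.1.2 * c 0 t.2].

Definition tflip (r : 'M[k]_n) : 'M[k]_n := r^T.

Definition tmap2 (f g : A -> A) (r : 'M[k]_n) : 'M[k]_n :=
  \sum_i \sum_j r i j *: tens2 (f (evec i)) (g (evec j)).

(* T_r : A^* -> A,  <T_r z, eta> = <r, z ⊗ eta> *)
Definition Tmap (r : 'M[k]_n) (z : A) : A := \row_j (\sum_i z 0 i * r i j).

Definition omega_sharp (om : A -> A -> k) (x : A) : A := \row_j om x (evec j).

Definition bilinear_op (m : A -> A -> A) : Prop :=
  (forall (a : k) x y z, m (a *: x + y) z = a *: m x z + m y z) /\
  (forall (a : k) x y z, m z (a *: x + y) = a *: m z x + m z y).

Definition bilinear_form (om : A -> A -> k) : Prop :=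
  (forall (a : k) x y z, om (a *: x + y) z = a * om x z + om y z) /\
  (forall (a : k) x y z, om z (a *: x + y) = a * om z x + om z y).

Variables (succ prec : A -> A -> A).
Definition circ x y := succ x y + prec x y.
Definition odot x y := succ x y + prec y x.
Definition Lsucc x := fun y => succ x y.
Definition Lcirc x := fun y => circ x y.
Definition Lstar x := fun y => circ x y + circ y x.
Definition Lodot x := fun y => odot x y.

Definition anti_pre_Novikov : Prop :=
  (forall x y z, succ (circ x y - circ y x) z = succ y (succ x z) - succ x (succ y z)) /\
  (forall x y z, prec x (circ y z) =
                 prec (succ y x) z - prec (prec x y) z - succ y (prec x z)) /\
  (forall x y z, succ (circ x y) z = - prec (succ x z) y) /\
  (forall x y z, prec (prec x y) z = prec (prec x z) y) /\
  (forall x y z, prec (circ x y - circ y x) z = succ x (circ y z) - succ y (circ x z)).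

Definition quadratic (om : A -> A -> k) : Prop :=
  [/\ bilinear_form om,
      (forall x y, om x y = om y x),
      (forall x, (forall y, om x y = 0) -> x = 0),
      (forall x y z, om (prec x y) z = - om x (circ z y)) &
      (forall x y z, om (succ x y) z = om (circ x z + circ z x) y)].

Definition inv_tensor (r : 'M[k]_n) : Prop :=
  forall x, tmap2 id (Lstar x) r - tmap2 (Lsucc x) id r = 0 /\
            tmap2 (Lcirc x) id r - tmap2 id (Lodot x) r = 0.

(* s = \sum_p a_p ⊗ b_p with p = (i,j), a_p = s i j e_i, b_p = e_j *)
Definition tfst (s : 'M[k]_n) (p : 'I_n * 'I_n) : A := s p.1 p.2 *: evec p.1.
Definition tsnd (p : 'I_n * 'I_n) : A := evec p.2.

Definition APN_YBE (s : 'M[k]_n) : Prop :=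
  \sum_(p : 'I_n * 'I_n) \sum_(q : 'I_n * 'I_n)
     (tens3 (circ (tfst s p) (tfst s q)) (tsnd p) (tsnd q)
    + tens3 (tfst s q) (tfst s p) (odot (tsnd p) (tsnd q))
    + tens3 (tfst s p) (prec (tsnd p) (tfst s q)) (tsnd q)) = 0.
End APN.

(* Main.v *)
Require Import Defs.
From HB Require Import structures.
From mathcomp Require Import all_boot all_order all_algebra.
From mathcomp Require Import ring.
Set Implicit Arguments. Unset Strict Implicit. Unset Printing Implicit Defensive.
Import GRing.Theory.
Local Open Scope ring_scope.

Section Lin.
Variables (k : fieldType) (n : nat).
Local Notation A := 'rV[k]_n.

Definition linf (G : A -> k) := forall a x y, G (a *: x + y) = a * G x + G y.
Definition linv (f : A -> A) := forall a x y, f (a *: x + y) = a *: f x + f y.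

Section LF.
Variables (G : A -> k) (hG : linf G).
Lemma linf0 : G 0 = 0.
Proof. have := hG 1 0 0; rewrite scale1r addr0 mul1r => h.
by apply: (addrI (G 0)); rewrite addr0 -h. Qed.
Lemma linfD x y : G (x + y) = G x + G y.
Proof. by rewrite -[x]scale1r hG mul1r scale1r. Qed.
Lemma linfZ a x : G (a *: x) = a * G x.
Proof. by rewrite -[a *: x]addr0 hG linf0 addr0. Qed.
Lemma linfN x : G (- x) = - G x.
Proof. by rewrite -scaleN1r linfZ mulN1r. Qed.
Lemma linfB x y : G (x - y) = G x - G y.
Proof. by rewrite linfD linfN. Qed.
Lemma linf_sumZ (I : Type) (r : seq I) (P : pred I) (c : I -> k) (u : I -> A) :
  G (\sum_(i <- r | P i) c i *: u i) = \sum_(i <- r | P i) c i * G (u i).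
Proof. by elim/big_rec2: _ => [|i y1 y2 _ <-]; rewrite ?linf0 ?hG. Qed.
Lemma linf_sum (I : Type) (r : seq I) (P : pred I) (u : I -> A) :
  G (\sum_(i <- r | P i) u i) = \sum_(i <- r | P i) G (u i).
Proof. by elim/big_rec2: _ => [|i y1 y2 _ <-]; rewrite ?linf0 ?linfD. Qed.
Lemma linf_expand x : G x = \sum_j x 0 j * G (evec k j).
Proof. by rewrite {1}(row_sum_delta x) linf_sumZ. Qed.
End LF.

Section LV.
Variables (f : A -> A) (hf : linv f).
Lemma linv0 : f 0 = 0.
Proof. have := hf 1 0 0; rewrite scale1r addr0 scale1r => h.
by apply: (addrI (f 0)); rewrite addr0 -h. Qed.
Lemma linvD x y : f (x + y) = f x + f y.
Proof. by rewrite -[x]scale1r hf !scale1r. Qed.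
Lemma linvZ a x : f (a *: x) = a *: f x.
Proof. by rewrite -[a *: x]addr0 hf linv0 addr0. Qed.
Lemma linvN x : f (- x) = - f x.
Proof. by rewrite -scaleN1r linvZ scaleN1r. Qed.
Lemma linvB x y : f (x - y) = f x - f y.
Proof. by rewrite linvD linvN. Qed.
Lemma linv_sumZ (I : Type) (r : seq I) (P : pred I) (c : I -> k) (u : I -> A) :
  f (\sum_(i <- r | P i) c i *: u i) = \sum_(i <- r | P i) c i *: f (u i).
Proof. by elim/big_rec2: _ => [|i y1 y2 _ <-]; rewrite ?linv0 ?hf. Qed.
End LV.

Lemma linf_comp (G : A -> k) (f : A -> A) : linf G -> linv f -> linf (fun x => G (f x)).
Proof. by move=> hG hf a x y; rewrite hf hG. Qed.

Lemma bil_l (m : A -> A -> A) : bilinear_op m -> forall z, linv (m ^~ z).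
Proof. by case=> h _ z a x y; apply: h. Qed.
Lemma bil_r (m : A -> A -> A) : bilinear_op m -> forall z, linv (m z).
Proof. by case=> _ h z a x y; apply: h. Qed.
Lemma bf_l (om : A -> A -> k) : bilinear_form om -> forall z, linf (om ^~ z).
Proof. by case=> h _ z a x y; apply: h. Qed.
Lemma bf_r (om : A -> A -> k) : bilinear_form om -> forall z, linf (om z).
Proof. by case=> _ h z a x y; apply: h. Qed.

Lemma bil_add (m1 m2 : A -> A -> A) : bilinear_op m1 -> bilinear_op m2 ->
  bilinear_op (fun x y => m1 x y + m2 x y).
Proof.
move=> [h1 h2] [h3 h4]; split=> a x y z; rewrite ?h1 ?h2 ?h3 ?h4 scalerDr;
 rewrite -!addrA; congr (_ + _); rewrite addrCA; congr (_ + _); rewrite addrC.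
Qed.

Lemma bil_flip (m : A -> A -> A) : bilinear_op m -> bilinear_op (fun x y => m y x).
Proof. by case=> h1 h2; split=> a x y z; rewrite ?h1 ?h2. Qed.

Lemma G_m_sum2 (G : A -> k) (m : A -> A -> A) (hG : linf G) (hm : bilinear_op m)
  (I J : finType) (c : I -> k) (u : I -> A) (d : J -> k) (v : J -> A) :
  G (m (\sum_i c i *: u i) (\sum_j d j *: v j)) =
  \sum_i \sum_j c i * d j * G (m (u i) (v j)).
Proof.
rewrite (linv_sumZ (bil_l hm _)) (linf_sumZ hG); apply: eq_bigr => i _.
rewrite (linv_sumZ (bil_r hm _)) (linf_sumZ hG) mulr_sumr; apply: eq_bigr => j _.
by rewrite mulrA.
Qed.

Lemma linv_add (f g : 'rV[k]_n -> 'rV[k]_n) : linv f -> linv g -> linv (fun x => f x + g x).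
Proof.
move=> hf hg a x y; rewrite hf hg scalerDr -!addrA; congr (_ + _).
by rewrite addrCA.
Qed.
Lemma linf_sum2 (G : A -> k) (hG : linf G) (I J : finType) (c : I -> J -> k) (w : I -> J -> A) :
  G (\sum_i \sum_j c i j *: w i j) = \sum_i \sum_j c i j * G (w i j).
Proof. by rewrite (linf_sum hG); apply: eq_bigr => i _; rewrite (linf_sumZ hG). Qed.
End Lin.

Section Main.
Variables (k : fieldType) (n : nat).
Local Notation A := 'rV[k]_n.
Variables (succ prec : A -> A -> A) (om : A -> A -> k) (s : 'M[k]_n).
Hypotheses (hs : bilinear_op succ) (hp : bilinear_op prec)
  (hq : quadratic succ prec om) (hinv : inv_tensor succ prec (s + tflip s)).

Local Notation e := (evec k).
Local Notation cc := (circ succ prec).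
Local Notation od := (odot succ prec).

Let hb : bilinear_form om. Proof. by case: hq. Qed.
Let hsym : forall x y, om x y = om y x. Proof. by case: hq. Qed.
Let hnd : forall x, (forall y, om x y = 0) -> x = 0. Proof. by case: hq. Qed.
Let hQ1 : forall x y z, om (prec x y) z = - om x (cc z y). Proof. by case: hq. Qed.
Let hQ2 : forall x y z, om (succ x y) z = om (cc x z + cc z x) y. Proof. by case: hq. Qed.
Let hc : bilinear_op cc. Proof. exact: bil_add hs hp. Qed.
Let ho : bilinear_op od. Proof. exact: bil_add hs (bil_flip hp). Qed.

Let omDl (x y z : A) : om (x + y) z = om x z + om y z. Proof. exact (linfD (bf_l hb z) _ _). Qed.
Let omDr (x y z : A) : om z (x + y) = om z x + om z y. Proof. exact (linfD (bf_r hb z) _ _). Qed.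
Let omNl (x z : A) : om (- x) z = - om x z. Proof. exact (linfN (bf_l hb z) _). Qed.
Let omNr (x z : A) : om z (- x) = - om z x. Proof. exact (linfN (bf_r hb z) _). Qed.
Let omBl (x y z : A) : om (x - y) z = om x z - om y z. Proof. exact (linfB (bf_l hb z) _ _). Qed.
Let omBr (x y z : A) : om z (x - y) = om z x - om z y. Proof. exact (linfB (bf_r hb z) _ _). Qed.

Lemma mDl (m : A -> A -> A) : bilinear_op m -> forall x y z, m (x + y) z = m x z + m y z.
Proof. by move=> hm x y z; exact (linvD (bil_l hm z) _ _). Qed.
Lemma mDr (m : A -> A -> A) : bilinear_op m -> forall x y z, m z (x + y) = m z x + m z y.
Proof. by move=> hm x y z; exact (linvD (bil_r hm z) _ _). Qed.
Lemma mBl (m : A -> A -> A) : bilinear_op m -> forall x y z, m (x - y) z = m x z - m y z.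
Proof. by move=> hm x y z; exact (linvB (bil_l hm z) _ _). Qed.
Lemma mBr (m : A -> A -> A) : bilinear_op m -> forall x y z, m z (x - y) = m z x - m z y.
Proof. by move=> hm x y z; exact (linvB (bil_r hm z) _ _). Qed.

Lemma om_inj u v : (forall w, om u w = om v w) -> u = v.
Proof.
move=> h; apply/eqP; rewrite -subr_eq0; apply/eqP; apply: hnd => w.
by rewrite omBl h subrr.
Qed.

Lemma adj1 a b c : om (prec a b) c = - om a (cc c b). Proof. exact: hQ1. Qed.
Lemma adj2 a b c : om (succ a b) c = om (cc a c + cc c a) b. Proof. exact: hQ2. Qed.
Lemma adj4 a b c : om (cc a b) c = om b (od a c).
Proof.
rewrite /odot omDr (hsym b) (hsym b) adj2 hQ1 (hsym c (cc b a)) omDl.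
by rewrite addrK.
Qed.
Lemma adj6 a b c : om (prec a b) c = - om b (prec a c + succ c a).
Proof.
have -> : prec a b = cc a b - succ a b by rewrite /circ addrC addKr.
rewrite omBl adj4 adj2 (hsym _ b) /odot /circ !omDr; ring.
Qed.

Definition P x := Tmap s (omega_sharp om x).
Definition P' x := Tmap (tflip s) (omega_sharp om x).
Definition Q x := Tmap (s + tflip s) (omega_sharp om x).

Lemma Tmap_sum r x : Tmap r (omega_sharp om x) = \sum_i \sum_j (om x (e i) * r i j) *: e j.
Proof.
rewrite {1}(row_sum_delta (Tmap _ _)) exchange_big; apply: eq_bigr => j _.
by rewrite -scaler_suml !mxE; congr (_ *: _); apply: eq_bigr => i _; rewrite !mxE.
Qed.

Lemma Tmap_lin r : linv (fun x => Tmap r (omega_sharp om x)).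
Proof.
move=> a x y; apply/rowP => j; rewrite !mxE mulr_sumr -big_split; apply: eq_bigr => i _.
by rewrite !mxE (bf_l hb (e i)) mulrDl mulrA.
Qed.

Lemma Q_split x : Q x = P x + P' x.
Proof.
apply/rowP => j; rewrite !mxE -big_split; apply: eq_bigr => i _; by rewrite !mxE mulrDr.
Qed.

Lemma P_sum x : P x = \sum_p om x (tfst s p) *: tsnd k p.
Proof.
rewrite /P Tmap_sum pair_bigA; apply: eq_bigr => p _.
by rewrite /tfst /tsnd (linfZ (bf_r hb x)) mulrC.
Qed.

Lemma P'_sum y : P' y = \sum_p om y (tsnd k p) *: tfst s p.
Proof.
rewrite /P' Tmap_sum exchange_big pair_bigA; apply: eq_bigr => p _.
by rewrite /tfst /tsnd mxE scalerA.
Qed.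

Lemma adjPP x y : om (P x) y = om x (P' y).
Proof.
rewrite P_sum P'_sum (linf_sumZ (bf_l hb y)) (linf_sumZ (bf_r hb x)).
by apply: eq_bigr => p _; rewrite mulrC (hsym (tsnd k p)).
Qed.
Lemma adjP'P x y : om (P' x) y = om x (P y).
Proof. by rewrite hsym -adjPP hsym. Qed.
Lemma adjQ x y : om (Q x) y = om x (Q y).
Proof. by rewrite !Q_split omDl omDr adjPP adjP'P addrC. Qed.

Let linP : linv P. Proof. exact: Tmap_lin. Qed.
Let linP' : linv P'. Proof. exact: Tmap_lin. Qed.
Let linQ : linv Q. Proof. exact: Tmap_lin. Qed.

Local Notation r := (s + tflip s).

Definition M2 (R : 'M[k]_n) u v := \sum_i \sum_j R i j * (om u (e i) * om v (e j)).
Lemma M2_lin u v a R1 R2 : M2 (a *: R1 + R2) u v = a * M2 R1 u v + M2 R2 u v.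
Proof.
rewrite /M2 mulr_sumr -big_split; apply: eq_bigr => i _.
rewrite mulr_sumr -big_split; apply: eq_bigr => j _; rewrite !mxE /=; ring.
Qed.
Lemma M20 u v : M2 0 u v = 0.
Proof. by rewrite /M2 big1 // => i _; rewrite big1 // => j _; rewrite mxE mul0r. Qed.
Lemma M2B u v R1 R2 : M2 (R1 - R2) u v = M2 R1 u v - M2 R2 u v.
Proof.
rewrite /M2 -sumrB; apply: eq_bigr => i _; rewrite -sumrB; apply: eq_bigr => j _.
rewrite !mxE; ring.
Qed.
Lemma M2_sumZ u v (I : Type) (rr : seq I) (PP : pred I) (c : I -> k) (R : I -> 'M[k]_n) :
  M2 (\sum_(i <- rr | PP i) c i *: R i) u v = \sum_(i <- rr | PP i) c i * M2 (R i) u v.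
Proof. by elim/big_rec2: _ => [|i y1 y2 _ <-]; rewrite ?M20 ?M2_lin. Qed.
Lemma M2_sum u v (I : Type) (rr : seq I) (PP : pred I) (R : I -> 'M[k]_n) :
  M2 (\sum_(i <- rr | PP i) R i) u v = \sum_(i <- rr | PP i) M2 (R i) u v.
Proof.
elim/big_rec2: _ => [|i y1 y2 _ <-]; rewrite ?M20 //.
by have := M2_lin u v 1 (R i) y2; rewrite scale1r mul1r.
Qed.
Lemma M2_tens2 u v a b : M2 (tens2 a b) u v = om u a * om v b.
Proof.
rewrite (linf_expand (bf_r hb u) a) (linf_expand (bf_r hb v) b) mulr_suml.
apply: eq_bigr => i _; rewrite mulr_sumr; apply: eq_bigr => j _; rewrite mxE; ring.
Qed.
Lemma M2_tmap2 u v f g R : M2 (tmap2 f g R) u v =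
  \sum_i \sum_j R i j * (om u (f (e i)) * om v (g (e j))).
Proof.
rewrite /tmap2 M2_sum; apply: eq_bigr => i _; rewrite M2_sumZ; apply: eq_bigr => j _.
by rewrite M2_tens2.
Qed.

Lemma rsym : tflip r = r.
Proof. by apply/matrixP => i j; rewrite /tflip !mxE addrC. Qed.

Lemma Q_sum1 u : Q u = \sum_i \sum_j (om u (e i) * r i j) *: e j.
Proof. exact: Tmap_sum. Qed.
Lemma Q_sum2 v : Q v = \sum_i \sum_j (om v (e j) * r i j) *: e i.
Proof.
rewrite /Q -{1}rsym Tmap_sum exchange_big; apply: eq_bigr => i _; apply: eq_bigr => j _.
by rewrite /tflip !mxE.
Qed.

Lemma I1 x u v : om v (cc x (Q u) + cc (Q u) x) = om u (succ x (Q v)).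
Proof.
have [h1 _] := hinv x.
have E := congr1 (fun R => M2 R u v) h1; rewrite /= M2B !M2_tmap2 M20 in E.
move/eqP: E; rewrite subr_eq0 => /eqP E.
have G1 : linf (fun w => om v (cc x w + cc w x)).
  exact: linf_comp (bf_r hb v) (linv_add (bil_r hc x) (bil_l hc x)).
have G2 : linf (fun w => om u (succ x w)).
  exact: linf_comp (bf_r hb u) (bil_r hs x).
transitivity (\sum_i \sum_j (om u (e i) * r i j) * om v (cc x (e j) + cc (e j) x)).
  by rewrite Q_sum1; exact (linf_sum2 G1 _ _).
transitivity (\sum_i \sum_j (om v (e j) * r i j) * om u (succ x (e i))); last first.
  by rewrite Q_sum2; symmetry; exact (linf_sum2 G2 _ _).
transitivity (\sum_i \sum_j r i j * (om u (id (e i)) * om v (Lstar succ prec x (e j)))).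
  by apply: eq_bigr => i _; apply: eq_bigr => j _; rewrite /Lstar /=; ring.
rewrite E; apply: eq_bigr => i _; apply: eq_bigr => j _; rewrite /Lsucc /=; ring.
Qed.

Lemma I2 x u v : om u (cc x (Q v)) = om v (od x (Q u)).
Proof.
have [_ h2] := hinv x.
have E := congr1 (fun R => M2 R u v) h2; rewrite /= M2B !M2_tmap2 M20 in E.
move/eqP: E; rewrite subr_eq0 => /eqP E.
have G1 : linf (fun w => om u (cc x w)).
  exact: linf_comp (bf_r hb u) (bil_r hc x).
have G2 : linf (fun w => om v (od x w)).
  exact: linf_comp (bf_r hb v) (bil_r ho x).
transitivity (\sum_i \sum_j (om v (e j) * r i j) * om u (cc x (e i))).
  by rewrite Q_sum2; exact (linf_sum2 G1 _ _).
transitivity (\sum_i \sum_j (om u (e i) * r i j) * om v (od x (e j))); last first.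
  by rewrite Q_sum1; symmetry; exact (linf_sum2 G2 _ _).
transitivity (\sum_i \sum_j r i j * (om u (Lcirc succ prec x (e i)) * om v (id (e j)))).
  by apply: eq_bigr => i _; apply: eq_bigr => j _; rewrite /Lcirc /=; ring.
rewrite E; apply: eq_bigr => i _; apply: eq_bigr => j _; rewrite /Lodot /=; ring.
Qed.

Lemma C1 x v : Q (succ x v) = succ x (Q v).
Proof.
apply: om_inj => u; rewrite adjQ adj2 hsym I1 hsym //.
Qed.
Lemma C2 x v : Q (cc x v) = cc x (Q v).
Proof. apply: om_inj => u; rewrite adjQ adj4 -I2 hsym //. Qed.
Lemma C3 z y : Q (cc z y + cc y z) = cc z (Q y) + cc (Q y) z.
Proof.
apply: om_inj => u; rewrite adjQ -adj2 -C1 adjQ adj2 //.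
Qed.
Lemma C4 y z : Q (cc y z) = cc (Q y) z.
Proof.
have := C3 z y; rewrite (linvD linQ) C2 => /addrI //.
Qed.
Lemma C5 y x : Q (prec y x) = prec (Q y) x.
Proof.
apply: om_inj => u; rewrite adjQ adj1 -C4 -adjQ -adj1 //.
Qed.
Lemma C6 y x : Q (succ y x) = succ (Q y) x.
Proof.
have E a b : succ a b = cc a b - prec a b by rewrite /circ addrK.
by rewrite E (linvB linQ) C4 C5 -E.
Qed.

Definition Eprec x y := prec (P x) (P y) - P (prec (P x) y + prec x (P y) - prec x (Q y)).
Definition Esucc x y := succ (P x) (P y) - P (succ (P x) y + succ x (P y) - succ x (Q y)).
Definition Tform x y z :=
  om x (cc (P' y) (P' z)) + om z (od (P y) (P x)) + om y (prec (P x) (P' z)).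

Lemma Wgen (m : A -> A -> A) : bilinear_op m -> forall a b,
  m (P a) b + m a (P b) - m a (Q b) = m (P a) b - m a (P' b).
Proof. by move=> hm a b; rewrite Q_split (mDr hm) opprD addrA addrK. Qed.

Lemma claimA x y z : Tform x y z = - om (Eprec x z) y.
Proof.
have e1 : om (P x) (cc (P y) z) + om (P x) (cc (P' y) z) =
          om (P x) (cc y (P z)) + om (P x) (cc y (P' z)).
  by rewrite -!omDr -(mDl hc) -(mDr hc) -!Q_split -C4 C2.
move: e1 => /(canRL (addrK _)) e1.
have t1 : om z (od (P y) (P x)) = om (P x) (cc (P y) z) by rewrite -adj4 hsym.
have t2 : om y (prec (P x) (P' z)) = - om (P x) (cc y (P' z)) by rewrite hsym adj1.
have t3 : om (prec (P x) (P z)) y = - om (P x) (cc y (P z)) by rewrite adj1.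
have t4 : om (prec (P x) z) (P' y) = - om (P x) (cc (P' y) z) by rewrite adj1.
have t5 : om (prec x (P' z)) (P' y) = - om x (cc (P' y) (P' z)) by rewrite adj1.
rewrite /Tform t1 t2 /Eprec (Wgen hp) omBl (adjPP (prec (P x) z - prec x (P' z))) omBl t3 t4 t5 e1; ring.
Qed.
Lemma claimB x y z : Tform x y z = om z (Eprec x y + Esucc y x).
Proof.
have u1 : om x (cc (P' y) (P' z)) = om (P' z) (succ (P' y) x) + om (P' z) (prec x (P' y)).
  by rewrite hsym adj4 /odot omDr.
have u2 : om z (od (P y) (P x)) = om z (succ (P y) (P x)) + om z (prec (P x) (P y)).
  by rewrite /odot omDr.
have u3 : om y (prec (P x) (P' z)) = - (om (P' z) (prec (P x) y) + om (P' z) (succ y (P x))).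
  by rewrite hsym adj6 omDr.
have v1 : om z (P (prec (P x) y - prec x (P' y))) =
          om (P' z) (prec (P x) y) - om (P' z) (prec x (P' y)).
  by rewrite hsym adjPP hsym omBr.
have v2 : om z (P (succ (P y) x - succ y (P' x))) =
          om (P' z) (succ (P y) x) - om (P' z) (succ y (P' x)).
  by rewrite hsym adjPP hsym omBr.
have e2 : om (P' z) (succ (P y) x) + om (P' z) (succ (P' y) x) =
          om (P' z) (succ y (P x)) + om (P' z) (succ y (P' x)).
  by rewrite -!omDr -(mDl hs) -(mDr hs) -!Q_split -C6 C1.
move: e2 => /(canRL (addrK _)) e2.
rewrite /Tform u1 u2 u3 omDr /Eprec /Esucc !omBr (Wgen hp) (Wgen hs) v1 v2 e2; ring.
Qed.

Let om0l (w : A) : om 0 w = 0. Proof. exact (linf0 (bf_l hb w)). Qed.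
Let om0r (w : A) : om w 0 = 0. Proof. exact (linf0 (bf_r hb w)). Qed.

Definition T3 (Y : {ffun 'I_n * 'I_n * 'I_n -> k}) x y z :=
  \sum_t Y t * (om x (e t.1.1) * om y (e t.1.2) * om z (e t.2)).

Lemma T3D Y1 Y2 x y z : T3 (Y1 + Y2) x y z = T3 Y1 x y z + T3 Y2 x y z.
Proof. rewrite /T3 -big_split; apply: eq_bigr => t _; rewrite ffunE /=; ring. Qed.
Lemma T30 x y z : T3 0 x y z = 0.
Proof. by rewrite /T3 big1 // => t _; rewrite ffunE mul0r. Qed.
Lemma T3_sum x y z (I : Type) (rr : seq I) (PP : pred I) (Y : I -> {ffun 'I_n * 'I_n * 'I_n -> k}) :
  T3 (\sum_(i <- rr | PP i) Y i) x y z = \sum_(i <- rr | PP i) T3 (Y i) x y z.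
Proof. by elim/big_rec2: _ => [|i y1 y2 _ <-]; rewrite ?T30 ?T3D. Qed.
Lemma T3_tens3 a b c x y z : T3 (tens3 a b c) x y z = om x a * om y b * om z c.
Proof.
rewrite (linf_expand (bf_r hb x) a) (linf_expand (bf_r hb y) b) (linf_expand (bf_r hb z) c).
rewrite big_distrlr /= pair_bigA big_distrlr /= pair_bigA /T3.
by apply: eq_bigr => t _; rewrite ffunE /=; ring.
Qed.

Lemma dual_basis : exists f : 'I_n -> A, forall a j, om (f a) (e j) = (a == j)%:R.
Proof.
pose M := \matrix_(i, j) om (e i) (e j).
have hM x j : (x *m M) 0 j = om x (e j).
  rewrite mxE (linf_expand (bf_l hb (e j)) x); apply: eq_bigr => i _; by rewrite mxE.
have fr : row_free M.
  apply: inj_row_free => v hv; apply: hnd => y.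
  rewrite (linf_expand (bf_r hb v) y); apply: big1 => j _.
  by rewrite -hM hv mxE mulr0.
have uM : M \in unitmx by rewrite -row_free_unit.
exists (fun a => e a *m invmx M) => a j.
by rewrite -hM mulmxKV // /evec mxE eqxx /= eq_sym.
Qed.

Lemma T3_dual f : (forall a j, om (f a) (e j) = (a == j)%:R) ->
  forall Y a b c, T3 Y (f a) (f b) (f c) = Y ((a, b), c).
Proof.
move=> hf Y a b c; rewrite /T3 (bigD1 ((a, b), c)) //= big1 ?addr0.
  by rewrite !hf !eqxx /= !mulr1.
move=> t ht; rewrite !hf; move: t ht => [[t1 t2] t3] /= ht.
case: (eqVneq a t1) => [e1|ne1]; first last.
  by rewrite /= mulr0n; ring.
case: (eqVneq b t2) => [e2|ne2]; first last.
  by rewrite /= mulr0n; ring.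
case: (eqVneq c t3) => [e3|ne3]; first last.
  by rewrite /= mulr0n; ring.
by subst; rewrite eqxx in ht.
Qed.

Lemma YBE_iff : APN_YBE succ prec s <-> forall x y z, Tform x y z = 0.
Proof.
rewrite /APN_YBE.
set Yb := (X in X = 0).
have key x y z : T3 Yb x y z = Tform x y z.
  rewrite /Yb T3_sum /Tform !P'_sum !P_sum.
  rewrite (G_m_sum2 (bf_r hb x) hc) (G_m_sum2 (bf_r hb z) ho) (G_m_sum2 (bf_r hb y) hp).
  rewrite -!big_split; apply: eq_bigr => p _; rewrite T3_sum -!big_split.
  apply: eq_bigr => q _; rewrite !T3D !T3_tens3 /=; ring.
split.
  by move=> H x y z; rewrite -key H T30.
move=> H; have [f hf] := dual_basis.
apply/ffunP => -[[a b] c]; rewrite -(T3_dual hf) key H ffunE //.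
Qed.

Lemma main_sec : APN_YBE succ prec s <->
  (forall x y,
     succ (P x) (P y) = P (succ (P x) y + succ x (P y) - succ x (Q y)) /\
     prec (P x) (P y) = P (prec (P x) y + prec x (P y) - prec x (Q y))).
Proof.
rewrite YBE_iff; split.
  move=> H.
  have Ep a b : Eprec a b = 0.
    apply: om_inj => w; have := claimA a w b; rewrite H => /esym/eqP.
    by rewrite oppr_eq0 => /eqP ->; rewrite om0l.
  have Es a b : Esucc a b = 0.
    apply: om_inj => w; rewrite om0l hsym.
    by have := claimB b a w; rewrite H Ep add0r => <-.
  move=> x y; split; apply/eqP; rewrite -subr_eq0; apply/eqP.
    exact: Es x y.
  exact: Ep x y.
move=> H x y z; rewrite claimB /Eprec /Esucc -(H x y).2 -(H y x).1 !subrr addr0 om0r //.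
Qed.

End Main.

Theorem mainTheorem15 (k : fieldType) (n : nat)
  (succ prec : 'rV[k]_n -> 'rV[k]_n -> 'rV[k]_n) (om : 'rV[k]_n -> 'rV[k]_n -> k)
  (s : 'M[k]_n) :
  bilinear_op succ -> bilinear_op prec ->
  anti_pre_Novikov succ prec ->
  quadratic succ prec om ->
  inv_tensor succ prec (s + tflip s) ->
  let P := fun x => Tmap s (omega_sharp om x) in
  APN_YBE succ prec s <->
  (forall x y,
     succ (P x) (P y) =
       P (succ (P x) y + succ x (P y) - succ x (Tmap (s + tflip s) (omega_sharp om y))) /\
     prec (P x) (P y) =
       P (prec (P x) y + prec x (P y) - prec x (Tmap (s + tflip s) (omega_sharp om y)))).
Proof.
move=> hs hp _ hq hinv P.
exact: (main_sec hs hp hq hinv).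
Qed.
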